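(* Let $(P_t)_{t\in\mathbb{R}_+}$ be a stochastically monotone Feller semigroup on $\mathbb{R}$. For $x\in\mathbb{R}$, $t\ge0$, $u\in[0,1]$ let $F^{[-1]}_{x,t}(u)=\inf\{y\in\mathbb{R}:P_t(x,(-\infty,y])\ge u\}\in\overline{\mathbb{R}}$, and let $F^{[-1]}_{-\infty,t}\equiv-\infty$, $F^{[-1]}_{+\infty,t}\equiv+\infty$. Then: (a) for all $x\in\overline{\mathbb{R}}$ and $t\ge0$, $u\mapsto F^{[-1]}_{x,t}(u)$ is non-decreasing; (b) for all $x\in\mathbb{R}$, $t\ge0$, $u\in(0,1)$, $F^{[-1]}_{x,t}(u)\in\mathbb{R}$; (c) for all $t\ge0$ and $u\in(0,1)$, $x\mapsto F^{[-1]}_{x,t}(u)$ is non-decreasing on $\overline{\mathbb{R}}$; (d) if $U$ is uniform on $[0,1]$, then for all $x\in\overline{\mathbb{R}}$, $t\ge0$, the law of $F^{[-1]}_{x,t}(U)$ is $\tilde{P}_t(x,\cdot)$; (e) for all $t\ge0$ and $x\in\overline{\mathbb{R}}$, for all $u\in[0,1]$ outside an at most countable set, the map $y\mapsto F^{[-1]}_{y,t}(u)$ from $\overline{\mathbb{R}}$ to $\overline{\mathbb{R}}$ is continuous at $x$.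
   Context: $\overline{\mathbb{R}}=[-\infty,+\infty]$ with the topology given by the metric $|\tanh y-\tanh x|$. $\tilde{P}_t$ is the kernel on $\overline{\mathbb{R}}$ with $\tilde{P}_t(x,B)=P_t(x,B\cap\mathbb{R})$ for $x\in\mathbb{R}$ and $\tilde{P}_t(\pm\infty,\cdot)=\delta_{\pm\infty}$. Feller semigroup on $\mathbb{R}$: Markov semigroup with $P_tf\in\mathcal{C}_0(\mathbb{R})$ for $f\in\mathcal{C}_0(\mathbb{R})$ and $\sup_x|P_tf-f|\to0$ as $t\to0^+$; stochastically monotone: $P_tf$ non-decreasing for bounded non-decreasing Borel $f$. *)

(* Defs.v *)
From HB Require Import structures.
From mathcomp Require Import all_boot all_order all_algebra.
From mathcomp Require Import all_classical all_reals all_analysis measurable_realfun.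
Set Implicit Arguments. Unset Strict Implicit. Unset Printing Implicit Defensive.
Import Order.TTheory GRing.Theory Num.Theory.
Import numFieldNormedType.Exports.
Local Open Scope classical_set_scope.
Local Open Scope ring_scope.

Section Defs.
Variable R : realType.

Definition kfamily := R -> R.-pker R ~> R.

Definition Pop (P : kfamily) (t : R) (f : R -> R) : R -> R :=
  fun x => (\int[P t x]_(y in setT) f y)%R.

Definition C0 (f : R -> R) : Prop :=
  continuous f /\ f @ pinfty_nbhs R --> (0 : R) /\ f @ ninfty_nbhs R --> (0 : R).

Definition markov_semigroup (P : kfamily) : Prop :=
  (forall (x : R) (B : set R), measurable B -> P 0 x B = \d_x B) /\
  (forall s t : R, 0 <= s -> 0 <= t -> forall (x : R) (B : set R), measurable B ->
     P (s + t) x B = (\int[P s x]_(y in setT) P t y B)%E).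

Definition feller_semigroup (P : kfamily) : Prop :=
  markov_semigroup P /\
  (forall t : R, 0 <= t -> forall f, C0 f -> C0 (Pop P t f)) /\
  (forall f, C0 f -> forall e : R, 0 < e -> exists2 d : R, 0 < d &
     forall t : R, 0 < t < d -> forall x : R, `|Pop P t f x - f x| <= e).

Definition stoch_monotone (P : kfamily) : Prop :=
  forall t : R, 0 <= t -> forall f : R -> R,
    measurable_fun setT f -> (exists M : R, forall x, `|f x| <= M) ->
    {homo f : x y / x <= y} -> {homo Pop P t f : x y / x <= y}.

Definition Finv (P : kfamily) (t : R) (x : \bar R) (u : R) : \bar R :=
  match x with
  | EFin x => ereal_inf [set y%:E | y in [set y : R | (u%:E <= P t x [set` `]-oo, y]])%E]]
  | +oo%E => +oo%E
  | -oo%E => -oo%E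
  end.

Definition Ptilde (P : kfamily) (t : R) (x : \bar R) (B : set (\bar R)) : \bar R :=
  match x with
  | EFin x => P t x (EFin @^-1` B)
  | +oo%E => \d_(+oo%E : \bar R) B
  | -oo%E => \d_(-oo%E : \bar R) B
  end.

End Defs.

(* Main.v *)
Require Import Defs.
From HB Require Import structures.
From mathcomp Require Import all_boot all_order all_algebra.
From mathcomp Require Import all_classical all_reals all_analysis measurable_realfun.
From mathcomp Require Import lra ring.
Import Order.TTheory GRing.Theory Num.Theory.
Import numFieldNormedType.Exports.
Local Open Scope classical_set_scope.
Local Open Scope ring_scope.
Section uniq.
Context {R : realType}.
Lemma mu_unique (m1 m2 : {measure set R -> \bar R}) : (m1 setT < +oo)%E ->
  (m2 setT < +oo)%E ->
  (forall r, m1 [set` `]-oo, r]] = m2 [set` `]-oo, r]]) ->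
  forall A, measurable A -> m1 A = m2 A.
Proof.
move=> m1f m2f h A mA.
have fin1 B : measurable B -> (m1 B < +oo)%E.
  by move=> mB; apply: le_lt_trans m1f; apply: le_measure; rewrite ?inE.
have fin2 B : measurable B -> (m2 B < +oo)%E.
  by move=> mB; apply: le_lt_trans m2f; apply: le_measure; rewrite ?inE.
apply: (measure_unique (@ocitv R) (fun n => [set` `]-(n%:R), n%:R]]) _ _ _ _ m1 m2) => //.
- exact: ocitvI.
- by move=> n; exact: is_ocitv.
- apply/seteqP; split => // x _.
  exists (Num.truncn `|x|).+1 => //=; rewrite in_itv/=.
  have := truncnS_gt `|x|; rewrite ltr_norml => /andP[h1 h2].
  by rewrite h1 ltW.
- move=> _ [[a b] _ <-] /=.
  have [ab|ba] := leP b a; first by rewrite set_itv_ge ?measure0// bnd_simp -leNgt.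
  have -> : [set` `]a, b]] = [set` `]-oo, b]] `\` [set` `]-oo, a]].
    apply/seteqP; split => x /=; rewrite !in_itv/= ?andbT.
      by move=> /andP[ax xb]; split=> //; apply/negP; rewrite -ltNge.
    by move=> [xb] /negP; rewrite -ltNge => ->.
  have sab : [set` `]-oo, b]] `&` [set` `]-oo, a]] = [set` `]-oo, a]].
    by apply/setIidr/subset_itvl; rewrite bnd_simp ltW.
  rewrite !measureD ?fin1 ?fin2//.
  by rewrite sab; congr (_ - _)%E; apply: h.
- move=> n; exact: fin1.
Qed.
End uniq.
Section pm.
Context {R : realType} (mu : {measure set R -> \bar R}) (mu1 : mu setT = 1%E).
Definition pm : set R -> \bar R := mu.
HB.instance Definition _ := Measure.on pm.
HB.instance Definition _ := Measure_isProbability.Build _ _ _ pm mu1.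
Definition idTR : R -> R := idfun.
HB.instance Definition _ := @isMeasurableFun.Build _ _ _ _ idTR (@measurable_id _ _ setT).
Definition F (r : R) : R := fine (mu [set` `]-oo, r]]).
Lemma cdfE r : cdf (idTR : {RV pm >-> R}) r = mu [set` `]-oo, r]].
Proof. reflexivity. Qed.

Lemma mu_fin A : measurable A -> mu A \is a fin_num.
Proof. by move=> mA; exact: (@fin_num_measure _ _ _ pm). Qed.

Lemma FE r : (F r)%:E = mu [set` `]-oo, r]].
Proof. by rewrite /F fineK// mu_fin. Qed.

Lemma F_nd : nondecreasing F.
Proof.
move=> a b ab; rewrite -lee_fin !FE -!cdfE; exact: cdf_nondecreasing.
Qed.

Lemma F_rc : right_continuous F.
Proof.
move=> a; apply: fine_cvg; rewrite FE -cdfE; exact: cdf_right_continuous.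
Qed.

Lemma F_y1 : F @ +oo --> (1:R).
Proof. exact/fine_cvg/(cvg_cdfy1 (idTR : {RV pm >-> R})). Qed.

Lemma F_Ny0 : F @ -oo --> (0:R).
Proof. exact/fine_cvg/(cvg_cdfNy0 (idTR : {RV pm >-> R})). Qed.

Lemma F_ge0 r : 0 <= F r.
Proof. by rewrite -lee_fin FE measure_ge0. Qed.

Lemma F_le1 r : F r <= 1.
Proof. by rewrite -lee_fin FE -cdfE cdf_le1. Qed.

Lemma mu_oy r : mu [set` `]r, +oo[] = (1 - F r)%:E.
Proof.
rewrite EFinB FE -setCitvl.
have := @probability_setC _ _ _ pm [set` `]-oo, r]] (measurable_itv _).
by [].
Qed.

Definition Q (u : R) : \bar R :=
  ereal_inf [set y%:E | y in [set y : R | (u%:E <= mu [set` `]-oo, y]])%E]].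

Lemma QE u : 0 < u < 1 -> exists q : R, Q u = q%:E /\ forall y, (q <= y) <-> (u <= F y).
Proof.
move=> /andP[u0 u1].
set S := [set y : R | (u%:E <= mu [set` `]-oo, y]])%E].
have SE y : S y <-> u <= F y by rewrite /S/= -FE lee_fin.
have [M [_ HM]] := cvgr_gt _ F_y1 _ u1.
have [m [_ Hm]] := cvgr_lt _ F_Ny0 _ u0.
have S0 : S !=set0 by exists (M + 1); apply/SE/ltW/HM; rewrite ltrDl.
have Slb : lbound S m.
  move=> s /SE us; rewrite leNgt; apply/negP => /Hm; rewrite ltNge us //.
have hlb : has_lbound S by exists m.
exists (inf S); split; first by rewrite /Q ereal_inf_EFin.
move=> y; split; last by move=> /SE Sy; exact: ge_inf.
move=> qy; rewrite leNgt; apply/negP => Fyu.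
have [e /= e0 He] : exists2 e : R, 0 < e & F (y + e) < u.
  have := cvgr_lt _ (F_rc y) _ Fyu.
  move=> [e /= e0 He]; exists (e / 2); first by rewrite divr_gt0.
  apply: He; last by rewrite ltrDl divr_gt0.
  rewrite /ball_/= opprD addrA subrr sub0r normrN gtr0_norm ?divr_gt0//.
  by rewrite ltr_pdivrMr// ltr_pMr// ltr1n.
have : y + e <= inf S.
  apply: lb_le_inf => // s /SE us; rewrite leNgt; apply/negP => ss.
  by have := lt_le_trans He (le_trans us (F_nd _ _ (ltW ss))); rewrite ltxx.
by rewrite leNgt (le_lt_trans qy)// ltrDl.
Qed.

End pm.
Arguments QE {R mu}. Arguments FE {R mu}. Arguments F_le1 {R mu}. Arguments F_ge0 {R mu}.
Arguments F_nd {R mu}. Arguments F_rc {R mu}. Arguments F_y1 {R mu}. Arguments F_Ny0 {R mu}.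
Arguments mu_oy {R mu}. Arguments mu_fin {R mu}.


Section ndm.
Context {R : realType}.
Lemma nd_emeasurable (D : set R) (f : R -> \bar R) : measurable D ->
  {homo f : x y / x <= y >-> (x <= y)%E} -> measurable_fun D f.
Proof.
move=> mD f_nd.
apply: (measurability (@ErealGenCInfty.G R)) => [|/= _ [_] [r] -> <-].
  exact: (@ErealGenCInfty.measurableE R).
apply: measurableI => //; apply: is_interval_measurable => s t/=.
rewrite !in_itv/= !andbT => fs ft u /andP[su ut].
by rewrite in_itv/= andbT (le_trans fs)// f_nd.
Qed.
End ndm.
Section main.
Context {R : realType} (P : kfamily R).

Lemma Pt1 t x : P t x setT = 1%E.
Proof. exact: prob_kernel. Qed.

Lemma FinvE t (x u : R) : Finv P t x%:E u = Q (P t x) u.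
Proof. by []. Qed.

Lemma Q_nd (mu : {measure set R -> \bar R}) u v : u <= v -> (Q mu u <= Q mu v)%E.
Proof.
move=> uv; apply: le_ereal_inf => _ [y /= hy <-]; exists y => //=.
by rewrite (le_trans _ hy)// lee_fin.
Qed.

Lemma Pop_indic t x (A : set R) : measurable A -> Pop P t \1_A x = fine (P t x A).
Proof. by move=> mA; rewrite /Pop /Rintegral integral_indic// setIT. Qed.

Lemma F_anti t : 0 <= t -> stoch_monotone P -> forall x y z : R, x <= y ->
  F (P t y) z <= F (P t x) z.
Proof.
move=> t0 SM x y z xy.
have mA : measurable [set` `]z, +oo[] by exact: measurable_itv.
have hb : exists M : R, forall r : R, `|\1_[set` `]z, +oo[] r| <= M.
  by exists 1 => r; rewrite indicE; case: (_ \in _); rewrite ?normr1 ?normr0.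
have hh : {homo (\1_[set` `]z, +oo[] : R -> R) : a b / a <= b}.
  move=> a b ab; rewrite !indicE; case: (boolP (a \in _)) => ha; last by case: (_ \in _).
  rewrite (_ : b \in _)//; move: ha; rewrite !inE/= !in_itv/= !andbT => ha.
  exact: lt_le_trans ha ab.
have := SM t t0 (\1_[set` `]z, +oo[]) (@measurable_indic _ _ R setT _ mA) hb hh x y xy.
rewrite !Pop_indic// !mu_oy ?Pt1//=.
by rewrite lerD2l lerN2.
Qed.

Lemma part_a t (x : \bar R) : {in `[0, 1] &, {homo Finv P t x : u v / u <= v >-> (u <= v)%E}}.
Proof. by case: x => [x| |] u v _ _ uv //=; exact: Q_nd. Qed.

Lemma part_b t (x u : R) : 0 < u < 1 -> Finv P t x%:E u \is a fin_num.
Proof. by move=> hu; rewrite FinvE; have [q [-> _]] := @QE _ (P t x) (Pt1 t x) u hu. Qed.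

Lemma part_c t u : 0 <= t -> stoch_monotone P -> 0 < u < 1 ->
  {homo (fun x => Finv P t x u) : x y / (x <= y)%E >-> (x <= y)%E}.
Proof.
move=> t0 SM hu [x| |] [y| |] //= xy; rewrite ?leey ?leNye//.
apply: le_ereal_inf => w [z hz <-{w}]; exists z => //.
move: hz; rewrite /= -(@FE _ (P t y) (Pt1 t y)) -(@FE _ (P t x) (Pt1 t x)) => hz.
apply: (le_trans hz); rewrite lee_fin.
by apply: F_anti; rewrite // -lee_fin.
Qed.
End main.

Section law.
Context {R : realType} (mu : {measure set R -> \bar R}) (mu1 : mu setT = 1%E).
Let D : set R := [set` `]0%R, 1%R[].
Let mD : measurable D := measurable_itv _.

Lemma Q_meas {E : set R} : measurable E -> measurable_fun E (Q mu).
Proof. by move=> mE; apply: nd_emeasurable => // u v; exact: Q_nd. Qed.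

Definition hq (u : R) : R := fine (Q mu u).

Lemma hq_meas : measurable_fun D hq.
Proof.
have : measurable_fun D (fine \o Q mu).
  have h1 := Q_meas mD.
  exact: (@measurableT_comp _ _ _ R (\bar R) R fine D (Q mu) (fine_measurable measurableT) h1).
by [].
Qed.

Definition m1 (A : set R) : \bar R := lebesgue_measure (D `&` hq @^-1` A).

Let m10 : m1 set0 = 0%E.
Proof. by rewrite /m1 preimage_set0 setI0 measure0. Qed.

Let m1_ge0 A : (0 <= m1 A)%E.
Proof. exact: measure_ge0. Qed.

Let m1_sa : semi_sigma_additive m1.
Proof.
move=> G mG tG mUG; rewrite /m1 preimage_bigcup setI_bigcupr.
apply: measure_semi_sigma_additive.
- by move=> n; apply: hq_meas.
- apply/trivIsetP => i j _ _ ij; rewrite setIACA setIid -preimage_setI.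
  by move/trivIsetP : tG => /(_ _ _ _ _ ij) ->//; rewrite preimage_set0 setI0.
- by rewrite -setI_bigcupr -preimage_bigcup; apply: hq_meas.
Qed.

HB.instance Definition _ := isMeasure.Build _ _ _ m1 m10 m1_ge0 m1_sa.

Lemma hqE {u} : D u -> Q mu u = (hq u)%:E /\ forall y, hq u <= y <-> u <= F mu y.
Proof.
move=> Du; have hu : 0 < u < 1 by move: Du; rewrite /D/= in_itv.
by have [q [qE qP]] := QE mu1 u hu; rewrite /hq qE.
Qed.

Lemma m1_oc r : m1 [set` `]-oo, r]] = mu [set` `]-oo, r]].
Proof.
rewrite -(FE mu1) /m1.
have F1 := F_le1 mu1 r; have F0 := F_ge0 mu1 r.
have -> : D `&` hq @^-1` [set` `]-oo, r]] =
    if F mu r == 1 then D else [set` `]0, F mu r]].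
  apply/seteqP; split => u.
    move=> [Du /=]; rewrite in_itv/= => /(hqE Du).2 uF.
    case: ifPn => // F1'; move: Du; rewrite /D/= !in_itv/= => /andP[-> _]//.
  case: ifPn => [/eqP F1'|F1'] Du.
    split => //=; rewrite in_itv/=; apply/(hqE Du).2; rewrite F1'.
    by move: Du; rewrite /D/= in_itv/= => /andP[_ /ltW].
  have Du' : D u.
    move: Du; rewrite /D /= !in_itv/= => /andP[u0 uF].
    by rewrite u0 /= (le_lt_trans uF)// lt_neqAle F1' F1.
  split => //=; rewrite in_itv/=; apply/(hqE Du').2.
  by move: Du; rewrite /= in_itv/= => /andP[_ ->].
case: ifPn => [/eqP ->|_].
  by rewrite /D lebesgue_measure_itv/= lte01 oppr0 adde0.
rewrite lebesgue_measure_itv/= lte_fin; case: ifPn => [_|]; first by rewrite oppr0 adde0.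
by rewrite -leNgt => h; congr (_%:E); apply/le_anti; rewrite h F0.
Qed.

Lemma law (B : set (\bar R)) : measurable B ->
  lebesgue_measure ([set` `[0%R, 1%R]] `&` Q mu @^-1` B) = mu (EFin @^-1` B).
Proof.
move=> mB.
have mA : measurable (EFin @^-1` B).
  by have := EFin_measurable measurableT mB; rewrite setTI.
rewrite -(@mu_unique _ m1 mu _ _ m1_oc) //; last first.
- by rewrite mu1 ltry.
- rewrite [X in (X < _)%E](_ : _ = lebesgue_measure D); last first.
    by rewrite /m1 /=; congr (lebesgue_measure _); apply/seteqP; split => [u []|u Du].
  by rewrite /D lebesgue_measure_itv/= lte01 oppr0 adde0 ltry.
have eqD : D `&` hq @^-1` (EFin @^-1` B) = D `&` Q mu @^-1` B.
  apply/seteqP; split => u [Du /=]; rewrite (hqE Du).1 => h; by split.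
rewrite [X in _ = X](_ : _ = lebesgue_measure (D `&` hq @^-1` (EFin @^-1` B))) //.
rewrite eqD.
have m01 : measurable ([set` `[0%R, 1%R]] `&` Q mu @^-1` B).
  exact: (Q_meas (measurable_itv _)).
have m01' : measurable (D `&` Q mu @^-1` B) by exact: (Q_meas mD).
apply/le_anti/andP; split; last first.
  apply: le_measure; rewrite ?inE//.
  by apply: setSI => u; rewrite /D/= !in_itv/= => /andP[/ltW -> /ltW ->].
apply: (@le_trans _ _ (lebesgue_measure ((D `&` Q mu @^-1` B) `|` ([set 0%R] `|` [set 1%R])))).
  apply: le_measure; rewrite ?inE//.
    by apply: measurableU => //; apply: measurableU.
  move=> u [/=]; rewrite in_itv/= => /andP[u0 u1] Bu.
  have [->|u0'] := eqVneq u 0; first by right; left.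
  have [->|u1'] := eqVneq u 1; first by right; right.
  left; split => //; rewrite /D/= in_itv/= lt_neqAle eq_sym u0' u0/=.
  by rewrite lt_neqAle u1' u1.
apply: le_trans (measureU2 _ _ _) _ => //; first by apply: measurableU.
apply: le_trans (leeD2l _ (measureU2 _ _ _)) _ => //.
rewrite -[X in (_ <= X)%E]adde0 leeD2l // le_eqVlt; apply/orP; left; apply/eqP.
rewrite -[RHS]adde0; congr (_ + _)%E; exact: lebesgue_measure_set1.
Qed.

End law.

Section partd.
Context {R : realType} (P : kfamily R).

Lemma cst_law (c : \bar R) (B : set (\bar R)) :
  lebesgue_measure ([set` `[0%R, 1%R]] `&` (fun _ : R => c) @^-1` B) = \d_c B.
Proof.
rewrite diracE; have [Bc|Bc] := pselect (B c).
  rewrite mem_set//; rewrite (_ : _ `&` _ = [set` `[0%R, 1%R]]).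
    by rewrite lebesgue_measure_itv/= lte01 oppr0 adde0.
  by apply/seteqP; split => [u []|u h].
rewrite memNset// (_ : _ `&` _ = set0) ?measure0//.
by apply/seteqP; split => [u [] //|].
Qed.

Lemma part_d (x : \bar R) t : 
     measurable_fun (`[0, 1] : set R) (Finv P t x) /\
     forall B : set (\bar R), measurable B ->
       (@lebesgue_measure R) ((`[0, 1] : set R) `&` (Finv P t x) @^-1` B) = Ptilde P t x B.
Proof.
case: x => [x| |]; split.
- exact: (Q_meas (P t x) (measurable_itv _)).
- by move=> B mB; exact: (@law _ (P t x) (Pt1 P t x) B mB).
- exact: measurable_cst.
- by move=> B mB; exact: cst_law.
- exact: measurable_cst.
- by move=> B mB; exact: cst_law.
Qed.
End partd.

Section bump.
Context {R : realType}.
Variables (a b d : R).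
Hypothesis d0 : 0 < d.

Definition bump (y : R) : R :=
  Num.max 0 (Num.min 1 (Num.min ((y - a + d) / d) ((b + d - y) / d))).

Lemma bump_ge0 y : 0 <= bump y.
Proof. by rewrite /bump le_max lexx. Qed.

Lemma bump_le1 y : bump y <= 1.
Proof. by rewrite /bump ge_max ler01 ge_min lexx. Qed.

Lemma bump1 y : a <= y <= b -> bump y = 1.
Proof.
move=> /andP[ay yb]; rewrite /bump.
have h1 : 1 <= (y - a + d) / d by rewrite ler_pdivlMr// mul1r lerDr subr_ge0.
have h2 : 1 <= (b + d - y) / d by rewrite ler_pdivlMr// mul1r addrAC lerDr subr_ge0.
have -> : Num.min 1 (Num.min ((y - a + d) / d) ((b + d - y) / d)) = 1.
  by apply/min_idPl; rewrite le_min h1 h2.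
by apply/max_idPr; exact: ler01.
Qed.

Lemma bump0 y : y <= a - d \/ b + d <= y -> bump y = 0.
Proof.
move=> h; rewrite /bump; apply/max_idPl.
rewrite ge_min; apply/orP; right; rewrite ge_min; apply/orP.
case: h => h; [left|right]; rewrite pmulr_lle0 ?invr_gt0//.
  lra.
by rewrite subr_le0.
Qed.

Lemma bump_cont : continuous bump.
Proof.
move=> y.
have c1 : {for y, continuous (fun y : R => (y - a + d) / d)}.
  apply: cvgM; last exact: cvg_cst.
  by apply: cvgD; [apply: cvgB; [exact: cvg_id|exact: cvg_cst]|exact: cvg_cst].
have c2 : {for y, continuous (fun y : R => (b + d - y) / d)}.
  apply: cvgM; last exact: cvg_cst.
  by apply: cvgB; [exact: cvg_cst|exact: cvg_id].
have c3 := @continuous_min R R _ _ y c1 c2.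
have k1 : {for y, continuous (cst (1:R))} by move=> ?; exact: cvg_cst.
have k0 : {for y, continuous (cst (0:R))} by move=> ?; exact: cvg_cst.
have c4 := @continuous_min R R (cst 1) _ y k1 c3.
rewrite /bump; exact (@continuous_max R R (cst 0) _ y k0 c4).
Qed.

Lemma bump_C0 : C0 bump.
Proof.
split; first exact: bump_cont.
split.
  apply: cvg_near_cst; exists (b + d); split; first exact: num_real.
  by move=> y hy; apply: bump0; right; exact: ltW.
apply: cvg_near_cst; exists (a - d); split; first exact: num_real.
by move=> y hy; apply: bump0; left; exact: ltW.
Qed.

End bump.

Section bump_int.
Context {R : realType} (mu : {measure set R -> \bar R}) (mufin : forall A, measurable A -> mu A \is a fin_num).
Variables (a b d : R).
Hypothesis d0 : 0 < d.

Lemma bump_int :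
  (mu [set` `[a, b]] <= (\int[mu]_(y in setT) bump a b d y)%:E <= mu [set` `]((a - d)%R), ((b + d)%R)[])%E.
Proof.
have mb : measurable_fun setT (fun y => (bump a b d y)%:E).
  by apply/measurable_EFinP; apply: continuous_measurable_fun; exact: bump_cont.
have mi (A : set R) : measurable A -> measurable_fun setT (fun y => (\1_A y : R)%:E).
  by move=> mA; apply/measurable_EFinP; exact: measurable_indic.
have Ige : (\int[mu]_(y in setT) (bump a b d y)%:E <= mu [set` `]((a - d)%R), ((b + d)%R)[])%E.
  rewrite -[X in (_ <= mu X)%E]setIT -integral_indic//.
  apply: ge0_le_integral => //.
  - by move=> y _; rewrite lee_fin bump_ge0.
  - exact: mi.
  move=> y _; rewrite lee_fin indicE.
  case: (boolP (y \in _)) => hy; first exact: bump_le1.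
  rewrite bump0 //; move: hy; rewrite notin_setE/= in_itv/= => /negP; rewrite negb_and -!leNgt.
  by case/orP => h; [left|right].
have Ile : (mu [set` `[a, b]] <= \int[mu]_(y in setT) (bump a b d y)%:E)%E.
  rewrite -[X in (mu X <= _)%E]setIT -integral_indic//.
  apply: ge0_le_integral => //.
  - exact: mi.
  move=> y _; rewrite lee_fin indicE.
  case: (boolP (y \in _)) => hy; last exact: bump_ge0.
  by rewrite bump1//; move: hy; rewrite inE/= in_itv/=.
have fin : (\int[mu]_(y in setT) (bump a b d y)%:E)%E \is a fin_num.
  rewrite ge0_fin_numE; last by apply: integral_ge0 => y _; rewrite lee_fin bump_ge0.
  apply: le_lt_trans Ige _; rewrite ltey_eq mufin//.
by rewrite /Rintegral fineK// Ile Ige.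
Qed.
End bump_int.

Section Foc.
Context {R : realType} (mu : {measure set R -> \bar R}) (mu1 : mu setT = 1%E).
Lemma F_oc a b : a <= b -> mu [set` `]a, b]] = (F mu b - F mu a)%:E.
Proof.
move=> ab.
have -> : [set` `]a, b]] = [set` `]-oo, b]] `\` [set` `]-oo, a]].
  apply/seteqP; split => x /=; rewrite !in_itv/= ?andbT.
    by move=> /andP[ax xb]; split=> //; apply/negP; rewrite -ltNge.
  by move=> [xb] /negP; rewrite -ltNge => ->.
have sab : [set` `]-oo, b]] `&` [set` `]-oo, a]] = [set` `]-oo, a]].
  by apply/setIidr/subset_itvl; rewrite bnd_simp.
rewrite measureD//; last by rewrite ltey_eq (mu_fin mu1).
by rewrite sab EFinB !(FE mu1).
Qed.
End Foc.
Arguments F_oc {R mu}.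

Section cont.
Context {R : realType} (P : kfamily R) (FP : feller_semigroup P) (SM : stoch_monotone P).
Variables (t : R) (t0 : 0 <= t).

Definition Pb a b d := Pop P t (bump a b d).

Lemma Pb_C0 a b d : 0 < d -> C0 (Pb a b d).
Proof. by move=> d0; have [_ [FC _]] := FP; apply: FC => //; exact: bump_C0. Qed.

Lemma Pb_int y a b d : 0 < d ->
  (P t y [set` `[a, b]] <= (Pb a b d y)%:E <= P t y [set` `]((a - d)%R), ((b + d)%R)[])%E.
Proof. by move=> d0; exact: (@bump_int _ (P t y) (mu_fin (Pt1 P t y)) a b d d0). Qed.

Lemma B1 y a b d : 0 < d -> a <= b -> F (P t y) b - F (P t y) a <= Pb a b d y.
Proof.
move=> d0 ab; have /andP[h1 _] := Pb_int y a b d d0.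
rewrite -lee_fin -(F_oc (Pt1 P t y) _ _ ab); apply: le_trans h1.
by apply: le_measure; rewrite ?inE//; apply: subset_itvr; rewrite bnd_simp.
Qed.

Lemma B2 y a b d : 0 < d -> Pb a b d y <= F (P t y) (b + d).
Proof.
move=> d0; have /andP[_ h2] := Pb_int y a b d d0.
rewrite -lee_fin (FE (Pt1 P t y)); apply: le_trans h2 _.
by apply: le_measure; rewrite ?inE//; apply: subset_itv; rewrite bnd_simp.
Qed.

Lemma B3 y a b d : 0 < d -> Pb a b d y <= 1 - F (P t y) (a - d).
Proof.
move=> d0; have /andP[_ h2] := Pb_int y a b d d0.
rewrite -lee_fin -(mu_oy (Pt1 P t y)); apply: le_trans h2 _.
by apply: le_measure; rewrite ?inE//; apply: subset_itv; rewrite bnd_simp.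
Qed.


Lemma near_low (x z z' u : R) : z < z' -> F (P t x) z' < u ->
  \forall y \near x, F (P t y) z < u.
Proof.
move=> zz' Fu.
have c0 : 0 < u - F (P t x) z' by rewrite subr_gt0.
have h1 : 1 - (u - F (P t x) z') / 2 < 1 by rewrite gtrBl divr_gt0.
have [M [_ HM]] := cvgr_gt _ (F_y1 (Pt1 P t x)) _ h1.
pose K := Num.max (z' + 1) (M + 1).
have KM : M < K by rewrite lt_max ltrDl ltr01 orbT.
have zK : z' <= K by rewrite le_max lerDl ler01.
have FK := HM K KM.
have d0 : 0 < z' - z by rewrite subr_gt0.
have hb := B1 x z' K _ d0 zK.
have hPb : 1 - u < Pb z' K (z' - z) x by lra.
have [Pc _] := Pb_C0 z' K _ d0.
have H := cvgr_gt _ (Pc x) _ hPb.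
near=> y.
have hy : 1 - u < Pb z' K (z' - z) y by near: y; exact: H.
have := B3 y z' K _ d0; rewrite (_ : z' - (z' - z) = z); last by ring.
lra.
Unshelve. all: by end_near.
Qed.

Lemma near_up (x z z' u : R) : z' < z -> u < F (P t x) z' ->
  \forall y \near x, u < F (P t y) z.
Proof.
move=> zz' Fu.
have c0 : 0 < (F (P t x) z' - u) / 2 by rewrite divr_gt0// subr_gt0.
have [m [_ Hm]] := cvgr_lt _ (F_Ny0 (Pt1 P t x)) _ c0.
pose K := Num.min (z' - 1) (m - 1).
have Km : K < m by rewrite gt_min gtrBl ltr01 orbT.
have zK : K <= z' by rewrite ge_min gerBl ler01.
have FK := Hm K Km.
have d0 : 0 < z - z' by rewrite subr_gt0.
have hb := B1 x K z' _ d0 zK.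
have hPb : u < Pb K z' (z - z') x by lra.
have [Pc _] := Pb_C0 K z' _ d0.
have H := cvgr_gt _ (Pc x) _ hPb.
near=> y.
have hy : u < Pb K z' (z - z') y by near: y; exact: H.
have := B2 y K z' _ d0; rewrite (_ : z' + (z - z') = z); last by ring.
lra.
Unshelve. all: by end_near.
Qed.

Lemma near_py (u M : R) : 0 < u -> \forall y \near +oo, F (P t y) M < u.
Proof.
move=> u0.
have c0 : 0 < u / 2 by rewrite divr_gt0.
have [m [_ Hm]] := cvgr_lt _ (F_Ny0 (Pt1 P t 0)) _ c0.
pose K := Num.min (M - 1) (m - 1).
have Km : K < m by rewrite gt_min gtrBl ltr01 orbT.
have KM : K <= M by rewrite ge_min gerBl ler01.
have FK := Hm K Km.
have [_ [Pc _]] := Pb_C0 K M _ (@ltr01 R).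
have [N [_ HN]] := cvgr_lt _ Pc _ c0.
exists (Num.max N 0); split; first exact: num_real.
move=> y; rewrite gt_max => /andP[Ny y0].
have := HN y Ny; have := B1 y K M _ (@ltr01 R) KM.
have := @F_anti _ P t t0 SM _ _ K (ltW y0).
lra.
Qed.

Lemma near_ny (u M : R) : u < 1 -> \forall y \near -oo, u < F (P t y) M.
Proof.
move=> u1.
have h1 : (1 + u) / 2 < 1 by rewrite ltr_pdivrMr// mul1r ltrD2l.
have c0 : 0 < (1 - u) / 2 by rewrite divr_gt0// subr_gt0.
have [N' [_ HN']] := cvgr_gt _ (F_y1 (Pt1 P t 0)) _ h1.
pose K := Num.max (M + 1) (N' + 1).
have KN : N' < K by rewrite lt_max ltrDl ltr01 orbT.
have MK : M <= K by rewrite le_max lerDl ler01.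
have FK := HN' K KN.
have [_ [_ Pc]] := Pb_C0 M K _ (@ltr01 R).
have [N [_ HN]] := cvgr_lt _ Pc _ c0.
exists (Num.min N 0); split; first exact: num_real.
move=> y; rewrite lt_min => /andP[Ny y0].
have := HN y Ny; have := B1 y M K _ (@ltr01 R) MK.
have := @F_anti _ P t t0 SM _ _ K (ltW y0).
lra.
Qed.

End cont.

Lemma part_e {R : realType} (P : kfamily R) : feller_semigroup P -> stoch_monotone P ->
  (forall (t : R) (x : \bar R), 0 <= t ->
     exists C : set R, countable C /\
       forall u : R, u \in `[0, 1] -> ~ C u ->
         {for x, continuous (fun y : \bar R => Finv P t y u)}).
Proof.
move=> FP SM t x t0.
pose g (o : option (option rat)) : R := match o with
  | None => 0 | Some None => 1 | Some (Some r) => F (P t (fine x)) (ratr r) end.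
exists (g @` setT); split.
  by apply: (card_le_trans (card_image_le _ _)); exact: countableP.
move=> u; rewrite in_itv/= => /andP[u0 u1] uC.
have u0' : 0 < u.
  by rewrite lt_neqAle u0 andbT; apply/eqP => h; apply: uC; exists None.
have u1' : u < 1.
  by rewrite lt_neqAle u1 andbT; apply/eqP => h; apply: uC; exists (Some None).
have hu : 0 < u < 1 by rewrite u0' u1'.
have Gr (r : R) : exists q : R, Finv P t r%:E u = q%:E /\ forall y, (q <= y) <-> (u <= F (P t r) y).
  exact: (@QE _ (P t r) (Pt1 P t r) u hu).
move: @g uC; case: x => [x| |] g uC.
- have [q [qE qP]] := Gr x.
  rewrite /prop_for /continuous_at qE; apply/fine_cvgP; split.
    have hf : \forall y \near (x : R), Finv P t y%:E u \is a fin_num.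
      by exists 1; [exact: ltr01 | move=> y _ /=; exact: part_b].
    exact: hf.
  apply/cvgrPdist_le => e e0.
  have e20 : 0 < e / 2 by rewrite divr_gt0.
  have lowx : F (P t x) (q - e / 2) < u.
    rewrite ltNge; apply/negP => /(qP _).2; lra.
  have [r0 r0in] : exists r0 : rat, ratr r0 \in `]q, q + e / 2[.
    by apply: rat_in_itvoo; rewrite ltrDl.
  move: r0in; rewrite in_itv/= => /andP[qr0 r0e].
  have upx : u < F (P t x) (q + e / 2).
    have h1 : u <= F (P t x) (ratr r0) by apply/(qP _).1; exact: ltW.
    have h2 : u != F (P t x) (ratr r0) by apply/eqP => h; apply: uC; exists (Some (Some r0)).
    apply: (lt_le_trans _ (F_nd (Pt1 P t x) _ _ (ltW r0e))).
    by rewrite lt_neqAle h1 h2.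
  have l1 : q - e < q - e / 2 by lra.
  have l2 : q + e / 2 < q + e by lra.
  have L := near_low P FP t t0 x (q - e) (q - e / 2) u l1 lowx.
  have U := near_up P FP t t0 x (q + e) (q + e / 2) u l2 upx.
  change (\forall r \near x, `|q - fine (Finv P t r%:E u)| <= e); near=> r.
  have [qr [qrE qrP]] := Gr r.
  rewrite qrE /=.
  have hl : F (P t r) (q - e) < u by near: r; exact: L.
  have hh : u < F (P t r) (q + e) by near: r; exact: U.
  have a1 : q - e < qr.
    rewrite ltNge; apply/negP => /(qrP _).1; lra.
  have a2 : qr <= q + e by apply/(qrP _).2; exact: ltW.
  rewrite ler_distlC; apply/andP; split; lra.
- change ((fun y => Finv P t y u) @ (nbhs (+oo%E : \bar R)) --> (+oo%E : \bar R)).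
  apply/cvgeyPge => A; apply/nbhs_ereal_pinfty; split; first by rewrite leey.
  near=> y; have [qy [qyE qyP]] := Gr y.
  have hy : F (P t y) A < u by near: y; exact: (near_py P FP SM t t0 u A u0').
  rewrite qyE lee_fin leNgt; apply/negP => h.
  have := (qyP A).1 (ltW h); lra.
- change ((fun y => Finv P t y u) @ (nbhs (-oo%E : \bar R)) --> (-oo%E : \bar R)).
  apply/cvgeNyPle => A; apply/nbhs_ereal_ninfty; split; first by rewrite leNye.
  near=> y; have [qy [qyE qyP]] := Gr y.
  have hy : u < F (P t y) A by near: y; exact: (near_ny P FP SM t t0 u A u1').
  by rewrite qyE lee_fin; apply/(qyP A).2; exact: ltW.
Unshelve. all: by end_near.
Qed.

Theorem lemma3p1 (R : realType) (P : kfamily R) :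
  feller_semigroup P -> stoch_monotone P ->
  (* (a) *)
  (forall (x : \bar R) (t : R), 0 <= t ->
     {in `[0, 1] &, {homo Finv P t x : u v / u <= v >-> (u <= v)%E}}) /\
  (* (b) *)
  (forall (x t u : R), 0 <= t -> 0 < u < 1 -> Finv P t x%:E u \is a fin_num) /\
  (* (c) *)
  (forall (t u : R), 0 <= t -> 0 < u < 1 ->
     {homo (fun x => Finv P t x u) : x y / (x <= y)%E >-> (x <= y)%E}) /\
  (* (d) law of F^{[-1]}_{x,t}(U), U uniform on [0,1] *)
  (forall (x : \bar R) (t : R), 0 <= t ->
     measurable_fun (`[0, 1] : set R) (Finv P t x) /\
     forall B : set (\bar R), measurable B ->
       (@lebesgue_measure R) ((`[0, 1] : set R) `&` (Finv P t x) @^-1` B) = Ptilde P t x B) /\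
  (* (e) *)
  (forall (t : R) (x : \bar R), 0 <= t ->
     exists C : set R, countable C /\
       forall u : R, u \in `[0, 1] -> ~ C u ->
         {for x, continuous (fun y : \bar R => Finv P t y u)}).
Proof.
move=> FP SM; split; first by move=> x t _; exact: part_a.
split; first by move=> x t u _; exact: part_b.
split; first by move=> t u t0 hu; exact: part_c.
split; first by move=> x t _; exact: part_d.
exact: part_e.
Qed.
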